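(* Let $\rho_{AB}$ be any two-qubit state, let $A_1,A_2,A_3$ be dichotomic ($\pm1$-valued) observables on the first qubit and $B_1,B_2,B_3$ dichotomic observables on the second qubit, and set $F_3=\frac{1}{\sqrt3}\big|\sum_{i=1}^3\mathrm{Tr}(\rho_{AB}\,A_i\otimes B_i)\big|$. Then $F_3\le 1/\eta_{opt}$, where $\eta_{opt}$ is the optimal (largest) unsharpness parameter $\eta\in[0,1]$ such that, for any three dichotomic qubit observables, their unsharp versions with parameter $\eta$ are jointly measurable.
   Context: For a dichotomic observable $A=P_+-P_-$ (with $P_\pm$ its spectral projections), its unsharp version with unsharpness parameter $\eta\in[0,1]$ is the two-outcome POVM with elements $A^{(\eta)}_{\pm}=\eta P_\pm+(1-\eta)\frac{I}{2}$, whose associated observable is $\eta A$ (for traceless $A$). A set of POVMs is jointly measurable if there is a single POVM from whose outcomes all of them are obtained as marginals. *)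

(* Defs.v *)
From HB Require Import structures.
From mathcomp Require Import all_boot all_order all_algebra.
From mathcomp Require Import boolp classical_sets reals.
From mathcomp Require Import complex mxtens.
Set Implicit Arguments. Unset Strict Implicit. Unset Printing Implicit Defensive.
Import Order.TTheory GRing.Theory Num.Theory.
Local Open Scope ring_scope.
Local Open Scope classical_set_scope.

Section QDefs.
Variable R : realType.
Local Notation C := (R[i]).

Definition rC (x : R) : C := Complex x 0.

Definition adj {m n : nat} (A : 'M[C]_(m, n)) : 'M[C]_(n, m) := (map_mx conjc A)^T.

Definition hermitian {n : nat} (A : 'M[C]_n) : Prop := adj A = A.

Definition psd {n : nat} (A : 'M[C]_n) : Prop :=
  hermitian A /\ forall v : 'cV[C]_n, 0 <= (adj v *m A *m v) 0 0.

Definition density {n : nat} (rho : 'M[C]_n) : Prop := psd rho /\ \tr rho = 1.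

Definition projection {n : nat} (P : 'M[C]_n) : Prop := hermitian P /\ P *m P = P.

Definition dichotomic {n : nat} (A : 'M[C]_n) : Prop :=
  exists Pp Pm : 'M[C]_n,
    [/\ projection Pp, projection Pm, Pp + Pm = 1%:M & A = Pp - Pm].

Definition spec_proj {n : nat} (A : 'M[C]_n) (s : bool) : 'M[C]_n :=
  (rC 2)^-1 *: (1%:M + (if s then A else - A)).

Definition unsharp {n : nat} (A : 'M[C]_n) (eta : R) (s : bool) : 'M[C]_n :=
  rC eta *: spec_proj A s + rC ((1 - eta) / 2) *: 1%:M.

Definition povm {n : nat} {I : finType} (M : I -> 'M[C]_n) : Prop :=
  (forall i, psd (M i)) /\ \sum_(i : I) M i = 1%:M.

Definition jointly_measurable {n k : nat} (M : 'I_k -> bool -> 'M[C]_n) : Prop :=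
  exists G : {ffun 'I_k -> bool} -> 'M[C]_n,
    povm G /\ forall (j : 'I_k) (s : bool), \sum_(l : {ffun 'I_k -> bool} | l j == s) G l = M j s.

Definition JM3_param (eta : R) : Prop :=
  0 <= eta <= 1 /\
  forall A : 'I_3 -> 'M[C]_2, (forall j, dichotomic (A j)) ->
    jointly_measurable (fun j => unsharp (A j) eta).

Definition eta_opt : R := sup [set eta | JM3_param eta].

Definition F3 (rho : 'M[C]_(2 * 2)) (A B : 'I_3 -> 'M[C]_2) : R :=
  (Num.sqrt 3)^-1 * Normc.normc (\sum_(i < 3) \tr (rho *m (A i *t B i))).

End QDefs.

(* Main.v *)
Require Import Defs.
From HB Require Import structures.
From mathcomp Require Import all_boot all_order all_algebra.
From mathcomp Require Import boolp classical_sets reals.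
From mathcomp Require Import complex mxtens.
From mathcomp Require Import ring lra.
Import Order.TTheory GRing.Theory Num.Theory.
Local Open Scope ring_scope.

Module Helpers.
Set Implicit Arguments. Unset Strict Implicit. Unset Printing Implicit Defensive.
Local Open Scope complex_scope.
Section S.
Variable R : realType.
Local Notation C := (R[i]).

Lemma rCE (x : R) : rC x = x%:C. Proof. by []. Qed.

Lemma adjD n m (A B : 'M[C]_(n,m)) : adj (A + B) = adj A + adj B.
Proof. by apply/matrixP => i j; rewrite !mxE rmorphD. Qed.
Lemma adjN n m (A : 'M[C]_(n,m)) : adj (- A) = - adj A.
Proof. by apply/matrixP => i j; rewrite !mxE rmorphN. Qed.
Lemma adjB n m (A B : 'M[C]_(n,m)) : adj (A - B) = adj A - adj B.
Proof. by rewrite adjD adjN. Qed.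
Lemma adjZ n m c (A : 'M[C]_(n,m)) : adj (c *: A) = c^*%C *: adj A.
Proof. by apply/matrixP => i j; rewrite !mxE rmorphM. Qed.
Lemma adj1 n : adj (1%:M : 'M[C]_n) = 1%:M.
Proof. by apply/matrixP => i j; rewrite !mxE conjc_nat eq_sym. Qed.
Lemma adjM n m p (A : 'M[C]_(n,m)) (B : 'M[C]_(m,p)) : adj (A *m B) = adj B *m adj A.
Proof. by rewrite /adj -trmx_mul map_mxM. Qed.
Lemma adjK n m (A : 'M[C]_(n,m)) : adj (adj A) = A.
Proof. by apply/matrixP => i j; rewrite !mxE conjcK. Qed.
Lemma adj_tens m n p q (A : 'M[C]_(m,n)) (B : 'M[C]_(p,q)) : adj (A *t B) = adj A *t adj B.
Proof. by rewrite /adj map_mxT trmx_tens. Qed.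

Lemma tensmxDl m n p q (A A' : 'M[C]_(m,n)) (B : 'M[C]_(p,q)) : (A + A') *t B = A *t B + A' *t B.
Proof. by apply/matrixP => i j; rewrite !mxE mulrDl. Qed.
Lemma tensmxDr m n p q (A : 'M[C]_(m,n)) (B B' : 'M[C]_(p,q)) : A *t (B + B') = A *t B + A *t B'.
Proof. by apply/matrixP => i j; rewrite !mxE mulrDr. Qed.
Lemma tensmxNl m n p q (A : 'M[C]_(m,n)) (B : 'M[C]_(p,q)) : (- A) *t B = - (A *t B).
Proof. by apply/matrixP => i j; rewrite !mxE mulNr. Qed.
Lemma tensmxNr m n p q (A : 'M[C]_(m,n)) (B : 'M[C]_(p,q)) : A *t (- B) = - (A *t B).
Proof. by apply/matrixP => i j; rewrite !mxE mulrN. Qed.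
Lemma tensmx11 m n : (1%:M : 'M[C]_m) *t (1%:M : 'M[C]_n) = 1%:M.
Proof.
apply/matrixP => i j.
case: (mxtens_indexP i)=> i0 i1; case: (mxtens_indexP j)=> j0 j1.
rewrite tensmxE !mxE (inj_eq (can_inj (@mxtens_indexK _ _))) xpair_eqE.
by case: (i0 == j0); case: (i1 == j1); rewrite /= ?mulr1 ?mulr0 ?mul0r.
Qed.

Lemma proj_tens m n (P : 'M[C]_m) (Q : 'M[C]_n) : projection P -> projection Q -> projection (P *t Q).
Proof.
move=> [hP iP] [hQ iQ]; split; first by rewrite /Defs.hermitian adj_tens hP hQ.
by rewrite tensmx_mul iP iQ.
Qed.

Lemma quad_entry n (M rho : 'M[C]_n) k :
  (adj M *m rho *m M) k k = (adj (col k M) *m rho *m col k M) 0 0.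
Proof.
rewrite !mxE; apply: eq_bigr => j _; rewrite !mxE; congr (_ * _).
by apply: eq_bigr => i _; rewrite !mxE.
Qed.

Lemma tr_psd_proj n (rho P : 'M[C]_n) : psd rho -> projection P -> 0 <= \tr (rho *m P).
Proof.
move=> [_ hr] [hP iP].
have -> : \tr (rho *m P) = \tr (adj P *m rho *m P).
  rewrite hP [RHS]mxtrace_mulC mulmxA iP. by rewrite mxtrace_mulC.
rewrite /mxtrace; apply: sumr_ge0 => k _; rewrite quad_entry; exact: hr.
Qed.


Lemma norm4 (a b c d : C) : 0 <= a -> 0 <= b -> 0 <= c -> 0 <= d ->
  `|a - b - (c - d)| <= a + b + (c + d).
Proof.
move=> ha hb hc hd.
apply: (le_trans (ler_normB _ _)); apply: lerD;
  apply: (le_trans (ler_normB _ _)); by rewrite !ger0_norm.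
Qed.

Lemma dich_tens_bound (rho : 'M[C]_(2 * 2)) (A B : 'M[C]_2) :
  density rho -> dichotomic A -> dichotomic B -> `|\tr (rho *m (A *t B))| <= 1.
Proof.
move=> [hr tr1] [Pp [Pm [pp pm s1 ->]]] [Qp [Qm [qp qm s2 ->]]].
have e1 : \tr (rho *m ((Pp + Pm) *t (Qp + Qm))) = 1 by rewrite s1 s2 tensmx11 mulmx1.
rewrite !tensmxDl !tensmxDr in e1.
rewrite [Pp - Pm]addrC !tensmxDl !tensmxDr !tensmxNl !tensmxNr opprK.
rewrite -e1 !mulmxDr !mulmxN !raddfD /= !raddfN /=.
set t1 := \tr (rho *m (Pp *t Qp)); set t2 := \tr (rho *m (Pp *t Qm)).
set t3 := \tr (rho *m (Pm *t Qp)); set t4 := \tr (rho *m (Pm *t Qm)).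
have h1 : 0 <= t1 by apply: tr_psd_proj => //; apply: proj_tens.
have h2 : 0 <= t2 by apply: tr_psd_proj => //; apply: proj_tens.
have h3 : 0 <= t3 by apply: tr_psd_proj => //; apply: proj_tens.
have h4 : 0 <= t4 by apply: tr_psd_proj => //; apply: proj_tens.
have -> : - t3 + t4 + (t1 - t2) = t1 - t2 - (t3 - t4) by ring.
exact: norm4.
Qed.


Lemma conj_i : ('i : C)^* = - 'i.
Proof. by apply/eqP; rewrite eq_complex /= oppr0 !eqxx. Qed.

Lemma unsharp_diff n (A : 'M[C]_n) eta :
  unsharp A eta true - unsharp A eta false = rC eta *: A.
Proof.
apply/matrixP => i j; rewrite /unsharp /spec_proj !mxE.
by rewrite !rCE; field.
Qed.


Lemma conj_i' : complex_conjc__canonical__GRing_RMorphism R 'i = - 'i.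
Proof. exact: conj_i. Qed.

Lemma conj_rC (x : R) : (rC x)^* = rC x.
Proof. exact: conjc_real. Qed.

Lemma herm_invol_dich n (A : 'M[C]_n) : adj A = A -> A *m A = 1%:M -> dichotomic A.
Proof.
move=> hA iA; exists (spec_proj A true), (spec_proj A false).
have hp : forall s, projection (spec_proj A s).
  move=> s; split.
    rewrite /Defs.hermitian /spec_proj adjZ conjc_inv conj_rC adjD adj1.
    by case: s; rewrite ?adjN hA.
  rewrite /spec_proj -scalemxAl -scalemxAr scalerA mulmxDl !mulmxDr !mul1mx mulmx1.
  apply/matrixP => i j.
  case: s; rewrite ?mulmxN ?mulNmx ?opprK iA !mxE !rCE; by field.
split => //; apply/matrixP => i j; rewrite /spec_proj !mxE !rCE; by field.
Qed.

Definition pauli (k : 'I_3) : 'M[C]_2 :=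
  \matrix_(i < 2, j < 2)
    if (i : nat) == j then (if (i : nat) == 0 then (k == 2 :> nat)%:R else - (k == 2 :> nat)%:R)
    else if (i : nat) == 0 then (k == 0 :> nat)%:R - 'i * (k == 1 :> nat)%:R
    else (k == 0 :> nat)%:R + 'i * (k == 1 :> nat)%:R.

Lemma pauli_dich k : dichotomic (pauli k).
Proof.
apply: herm_invol_dich.
  apply/matrixP => i j; rewrite !mxE.
  case: i => [[|[|//]] ?]; case: j => [[|[|//]] ?];
   rewrite /= ?rmorphN ?rmorphB ?rmorphD ?rmorphM ?conj_i' ?rmorph_nat //; ring.
apply/matrixP => i j; rewrite !mxE !big_ord_recr big_ord0 /= !mxE.
have ii : ('i : C) * 'i = -1 by rewrite -expr2 sqr_i.
case: i => [[|[|//]] ?]; case: j => [[|[|//]] ?];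
 case: k => [[|[|[|//]]] ?] /=; ring: ii.
Qed.


Lemma conj_real' (x : R) : complex_conjc__canonical__GRing_RMorphism R (x%:C) = x%:C.
Proof. exact: conjc_real. Qed.

Lemma sqrt3_sq : Num.sqrt 3 * Num.sqrt 3 = 3 :> R.
Proof. by rewrite -expr2 sqr_sqrtr. Qed.

Lemma sqrt3_gt1 : 1 < Num.sqrt 3 :> R.
Proof. rewrite -[X in X < _]sqrtr1 ltr_sqrt // ?ltr1n //; lra. Qed.

Lemma quad2 (G : 'M[C]_2) (x y : C) :
  let v : 'cV[C]_2 := \matrix_(i < 2, j < 1) (if (i : nat) == 0 then x else y) in
  (adj v *m G *m v) 0 0 =
  conjc x * G 0 0 * x + conjc x * G 0 1 * y + conjc y * G 1 0 * x + conjc y * G 1 1 * y.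
Proof.
move=> v; rewrite !(mxE, big_ord_recr, big_ord0) /=.
have e0 : widen_ord (leqnSn 1) ord_max = 0 :> 'I_2 by apply/val_inj.
have e1 : ord_max = 1 :> 'I_2 by apply/val_inj.
rewrite e0 e1; ring.
Qed.

Lemma conjx (a b : R) : conjc (a%:C - 'i * b%:C) = a%:C + 'i * b%:C.
Proof. apply/eqP; rewrite eq_complex /=; apply/andP; split; apply/eqP; ring. Qed.

Lemma conjy (a b : R) : conjc (- (a%:C + b%:C)) = - (a%:C + b%:C).
Proof. apply/eqP; rewrite eq_complex /=; apply/andP; split; apply/eqP; ring. Qed.

Lemma JM3_le (eta : R) : JM3_param eta -> eta <= (Num.sqrt 3)^-1.
Proof.
move=> [_ hJ]; have [G [[Gpsd Gsum] marg]] := hJ pauli pauli_dich.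
pose sg (l : {ffun 'I_3 -> bool}) k : C := (if l k then 1 else -1 : R)%:C.
have hmarg : forall j p q, \sum_l sg l j * G l p q = eta%:C * pauli j p q.
  move=> j p q.
  have := congr1 (fun M : 'M[C]_2 => M p q) (unsharp_diff (pauli j) eta).
  rewrite -(marg j true) -(marg j false) /= !mxE !summxE => <-.
  rewrite (bigID (fun l : {ffun 'I_3 -> bool} => l j)) /=.
  rewrite -sumrN; congr (_ + _).
    apply: eq_big => l; first by rewrite eqb_id.
    by move=> hl; rewrite /sg hl mul1r.
  apply: eq_big => l; first by rewrite eqbF_neg.
  by move=> hl; rewrite /sg (negbTE hl) rmorphN rmorph1 mulN1r.
have hsum : forall p q, \sum_l G l p q = (p == q)%:R.
  by move=> p q; rewrite -summxE Gsum mxE.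
pose r : C := (Num.sqrt 3)%:C.
pose X l := r * G l 0 0 + r * G l 1 1 - sg l 0 * G l 0 1 - sg l 0 * G l 1 0
   - 'i * (sg l 1 * G l 0 1) + 'i * (sg l 1 * G l 1 0) - sg l 2 * G l 0 0 + sg l 2 * G l 1 1.
have ii : ('i : C) * 'i = -1 by rewrite -expr2 sqr_i.
have rr : r * r = 3 by rewrite /r -rmorphM sqrt3_sq rmorph_nat.
have hX : forall l, 0 <= X l.
  move=> l.
  pose x := sg l 0 - 'i * sg l 1; pose y := - (sg l 2 + r).
  pose v : 'cV[C]_2 := \matrix_(i < 2, j < 1) (if (i : nat) == 0 then x else y).
  have hq := (Gpsd l).2 v.
  have sq : forall k, sg l k * sg l k = 1.
    by move=> k; rewrite /sg -rmorphM; case: (l k); rewrite ?mulrNN mulr1 rmorph1.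
  have pos : 0 < sg l 2 + r.
    rewrite /r /sg -rmorphD ltcR; case: (l 2); have := sqrt3_gt1; lra.
  rewrite -(pmulr_rge0 _ pos).
  suff <- : (adj v *m G l *m v) 0 0 = (sg l 2 + r) * X l by [].
 rewrite quad2.
  rewrite /x /y /X /sg /r conjx conjy.
  have := sq 0; have := sq 1; have := sq 2; rewrite /sg => s0 s1 s2.
  ring: s0 s1 s2 ii rr.
have hS : \sum_l X l = 2 * r - 6 * eta%:C.
  rewrite /X !big_split /= !sumrN -!mulr_sumr !hmarg !hsum !mxE /=.
  ring: ii.
have h0 : 0 <= \sum_l X l by apply: sumr_ge0 => l _; exact: hX.
have e : 2 * r - 6 * eta%:C = (2 * Num.sqrt 3 - 6 * eta)%:C.
  by rewrite /r rmorphB !rmorphM !rmorph_nat.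
rewrite hS e ler0c in h0.
have s3 := sqrt3_sq; have s1 := sqrt3_gt1.
have -> : (Num.sqrt 3)^-1 = Num.sqrt 3 / 3 :> R.
  have hn : Num.sqrt 3 != 0 :> R by rewrite gt_eqF //; lra.
  by rewrite -{3}s3 invfM mulrA mulfV ?mul1r.
lra.
Qed.


Definition mk3 (a b c : bool) : {ffun 'I_3 -> bool} :=
  [ffun i : 'I_3 => if (i : nat) == 0 then a else if (i : nat) == 1 then b else c].

Lemma sum_ffun3 (F : {ffun 'I_3 -> bool} -> C) :
  \sum_l F l = \sum_(a : bool) \sum_(b : bool) \sum_(c : bool) F (mk3 a b c).
Proof.
pose g (l : {ffun 'I_3 -> bool}) := ((l 0, l 1), l 2).
pose f (t : (bool * bool) * bool) := mk3 t.1.1 t.1.2 t.2.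
rewrite (reindex f) /=; last first.
  exists g => [[[a b] c] _|l _]; first by rewrite /g /f /mk3 !ffunE.
  apply/ffunP => i; rewrite /f /g /mk3 /= ffunE.
  by case: i => [[|[|[|//]]] ?] /=; congr (l _); apply: val_inj.
by rewrite !pair_big.
Qed.


Lemma proj_psd n (P : 'M[C]_n) : projection P -> psd P.
Proof.
move=> [hP iP]; split => // v.
have -> : adj v *m P *m v = adj (P *m v) *m (P *m v).
  by rewrite adjM hP -mulmxA -[in LHS]iP !mulmxA.
rewrite mxE; apply: sumr_ge0 => i _; rewrite !mxE mulrC; exact: mulcJ_ge0.
Qed.

Lemma psd0 n : psd (0 : 'M[C]_n).
Proof.
split; first by apply/matrixP => i j; rewrite !mxE rmorph0.
by move=> v; rewrite mulmx0 mul0mx mxE.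
Qed.

Lemma psdD n (A B : 'M[C]_n) : psd A -> psd B -> psd (A + B).
Proof.
move=> [hA qA] [hB qB]; split; first by rewrite /Defs.hermitian adjD hA hB.
by move=> v; rewrite mulmxDr mulmxDl mxE; apply: addr_ge0.
Qed.

Lemma psd_sum n (I : finType) (F : I -> 'M[C]_n) : (forall i, psd (F i)) -> psd (\sum_i F i).
Proof.
move=> h; apply: (big_ind (fun M => psd M)) => //; [exact: psd0 | exact: psdD].
Qed.

Lemma psdZ n (c : R) (A : 'M[C]_n) : 0 <= c -> psd A -> psd (c%:C *: A).
Proof.
move=> hc [hA qA]; split; first by rewrite /Defs.hermitian adjZ conjc_real hA.
by move=> v; rewrite -scalemxAr -scalemxAl mxE; apply: mulr_ge0 => //; rewrite ler0c.
Qed.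

Lemma spec_proj_dich n (A : 'M[C]_n) s : dichotomic A -> projection (spec_proj A s).
Proof.
move=> [Pp [Pm [pp pm s1 eA]]].
suff -> : spec_proj A s = if s then Pp else Pm by case: s.
rewrite /spec_proj eA -s1; apply/matrixP => i j; case: s; rewrite !mxE !rCE; by field.
Qed.


Lemma mk3_0 a b c : mk3 a b c 0 = a. Proof. by rewrite ffunE. Qed.
Lemma mk3_1 a b c : mk3 a b c 1 = b. Proof. by rewrite ffunE. Qed.
Lemma mk3_2 a b c : mk3 a b c 2 = c. Proof. by rewrite ffunE. Qed.

Lemma sum3 (F : 'I_3 -> C) : \sum_(k < 3) F k = F 0 + F 1 + F 2.
Proof.
rewrite !big_ord_recr big_ord0 /= add0r; congr (F _ + F _ + F _); exact: val_inj.
Qed.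

Lemma ord3 (j : 'I_3) : j = 0 \/ j = 1 \/ j = 2.
Proof.
case: j => [[|[|[|//]]] ?]; [left|right;left|right;right]; exact: val_inj.
Qed.

End S.

Section S.
Variable R : realType.
Local Notation C := (R[i]).
Lemma JM3_third : JM3_param (1/3 : R).
Proof.
split; first by apply/andP; split; lra.
move=> A hA.
pose G (l : {ffun 'I_3 -> bool}) : 'M[C]_2 := (12^-1 : R)%:C *: \sum_k spec_proj (A k) (l k).
have Gpq : forall l p q, G l p q = (rC 12)^-1 * (
   (rC 2)^-1 * ((p == q)%:R + (if l 0 then A 0 p q else - A 0 p q)) +
   (rC 2)^-1 * ((p == q)%:R + (if l 1 then A 1 p q else - A 1 p q)) +
   (rC 2)^-1 * ((p == q)%:R + (if l 2 then A 2 p q else - A 2 p q))).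
  move=> l p q; rewrite /G !mxE summxE sum3 /spec_proj !mxE fmorphV.
  by case: (l 0); case: (l 1); case: (l 2); rewrite ?mxE.
exists G; split; first split.
- move=> l; apply: psdZ; first by rewrite invr_ge0.
  by apply: psd_sum => k; apply: proj_psd; exact: spec_proj_dich.
- apply/matrixP => p q; rewrite summxE.
  under eq_bigr => l _ do rewrite Gpq.
  rewrite sum_ffun3 !big_bool /= !(mk3_0, mk3_1, mk3_2) mxE !rCE.
  by field.
move=> j s; apply/matrixP => p q; rewrite summxE big_mkcond /=.
under eq_bigr => l _ do rewrite Gpq.
rewrite sum_ffun3 !big_bool /=.
case: (ord3 j) => [->|[->|->]]; rewrite !(mk3_0, mk3_1, mk3_2);
  case: s; rewrite /= /unsharp /spec_proj !mxE !rCE; by field.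
Qed.

End S.

Lemma normc_C (R : rcfType) (z : R[i]) : ((Normc.normc z)%:C)%C = `|z|.
Proof. by case: z => a b; rewrite normc_def. Qed.

Lemma F3_le (R : realType) (rho : 'M[R[i]]_(2 * 2)) (A B : 'I_3 -> 'M[R[i]]_2) :
  density rho -> (forall j, dichotomic (A j)) -> (forall j, dichotomic (B j)) ->
  F3 rho A B <= Num.sqrt 3.
Proof.
move=> hr hA hB; rewrite /F3.
have h : Normc.normc (\sum_(i < 3) \tr (rho *m (A i *t B i))) <= 3.
  rewrite -lecR normc_C.
  apply: (le_trans (ler_norm_sum _ _ _)).
  rewrite sum3 rmorph_nat.
  have e : (3 : R[i]) = 1 + 1 + 1 by ring.
  rewrite e; apply: lerD; first apply: lerD; exact: dich_tens_bound.
have s3 := sqrt3_sq R; have s1 := sqrt3_gt1 R.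
have hp : 0 < (Num.sqrt 3 : R)^-1 by rewrite invr_gt0; lra.
apply: (le_trans (ler_wpM2l (ltW hp) h)).
rewrite -[X in _ * X <= _]s3 mulrA mulVf ?mul1r //; rewrite gt_eqF //; lra.
Qed.


Section S3.
Local Open Scope classical_set_scope.
Lemma eta_bounds (R : realType) : 1/3 <= eta_opt R /\ eta_opt R <= (Num.sqrt 3)^-1.
Proof.
have ne : [set eta : R | JM3_param eta] !=set0 by exists (1/3); exact: JM3_third.
have hsup : has_sup [set eta : R | JM3_param eta].
  split => //; exists 1 => x [/andP [_ h] _]; exact: h.
split; first exact: (sup_upper_bound hsup (JM3_third R)).
by apply: ge_sup => // y hy; exact: JM3_le hy.
Qed.
End S3.
End Helpers.
Import Helpers.

Theorem theorem3 (R : realType) (rho : 'M[R[i]]_(2 * 2)) (A B : 'I_3 -> 'M[R[i]]_2) :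
  density rho ->
  (forall j, dichotomic (A j)) ->
  (forall j, dichotomic (B j)) ->
  F3 rho A B <= (eta_opt R)^-1.
Proof.
move=> hr hA hB.
have [lo up] := eta_bounds R.
apply: le_trans; first exact: (@F3_le R rho A B hr hA hB).
have s1 := sqrt3_gt1 R.
rewrite -[X in X <= _]invrK lef_pV2 // posrE; first by rewrite invr_gt0; lra.
lra.
Qed.
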